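(* Let $A$ be a strongly AUF algebra, let $G$ be a projective generator of $\mathrm{Coh}_{\mathrm L}(A)$, and let $B=\mathrm{End}_{A,-}(G)^{\mathrm{op}}$, so that $G$ is an $A$-$B$ bimodule. Then the map $A\to\mathrm{End}^0_{-,B}(G)$ sending each $a\in A$ to the operator of left multiplication by $a$ on $G$ is a linear isomorphism.
   Context: All algebras are associative $\mathbb C$-algebras, not necessarily unital. An idempotent is $e$ with $e^2=e$. An algebra $A$ is AUF if there is a family $(e_i)_{i\in\mathfrak I}$ of mutually orthogonal idempotents with $\dim e_iAe_j<\infty$ and $A=\sum_{i,j}e_iAe_j$. A left $A$-module $M$ is quasicoherent if $\xi\in A\xi$ for all $\xi\in M$, coherent if moreover finitely generated; $\mathrm{Coh}_{\mathrm L}(A)$ is the category of coherent left $A$-modules. Irreducible means nonzero with no nonzero proper submodules. An idempotent $e$ is generating if every irreducible quasicoherent left $A$-module is a quotient of $Ae$; $A$ is strongly AUF if it is AUF and has a generating idempotent. A projective generator of $\mathrm{Coh}_{\mathrm L}(A)$ is an object projective as a left $A$-module such that every object of $\mathrm{Coh}_{\mathrm L}(A)$ is a quotient of a finite direct sum of copies of it. $B=\mathrm{End}_{A,-}(G)^{\mathrm{op}}$ acts on the right of $G$ by $\xi\cdot T=T(\xi)$. For a quasicoherent left $A$-module $M$: $M^\vee$ is the space of linear functionals $\varphi$ on $M$ for which there is an idempotent $e\in A$ with $\varphi(e\eta)=\varphi(\eta)$ for all $\eta\in M$; $\mathrm{End}^0(M)\subset\mathrm{End}(M)$ is the span of the operators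 $\eta\mapsto\varphi(\eta)\xi$ with $\xi\in M$, $\varphi\in M^\vee$; if $M$ carries a right action of an algebra $B$ commuting with $A$, $\mathrm{End}^0_{-,B}(M)=\{T\in\mathrm{End}^0(M):T(\xi b)=T(\xi)b\ \forall\xi,b\}$. *)

(* Defs.v *)
(* The field of complex numbers is rendered as
   [complex R] (= R[i], from mathcomp-real-closed) for [R : realType]
   (any realType is a model of the reals). *)
From HB Require Import structures.
From mathcomp Require Import all_boot all_order all_algebra.
From mathcomp Require Import reals.
From mathcomp Require Export complex.
Set Implicit Arguments. Unset Strict Implicit. Unset Printing Implicit Defensive.
Import GRing.Theory.
Local Open Scope ring_scope.

Section AUFDefs.
Variable K : fieldType.

Definition lin (U V : lmodType K) (f : U -> V) : Prop :=
  forall (c : K) (x y : U), f (c *: x + y) = c *: f x + f y.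

Definition lin_fun (U : lmodType K) (f : U -> K) : Prop :=
  forall (c : K) (x y : U), f (c *: x + y) = c * f x + f y.

Variable A : lmodType K.
Variable mul : A -> A -> A.

(* associative (not necessarily unital) K-algebra structure on A *)
Definition nu_alg : Prop :=
  (forall a b c, mul a (mul b c) = mul (mul a b) c) /\
  (forall a, lin (mul a)) /\ (forall b, lin (fun a => mul a b)).

Definition idempotent (e : A) : Prop := mul e e = e.

Definition AUF : Prop :=
  exists (I : Type) (e : I -> A),
    (forall i, idempotent (e i)) /\
    (forall i j, i <> j -> mul (e i) (e j) = 0) /\
    (forall i j, exists s : seq A,
        (forall k, (k < size s)%N -> exists a, nth 0 s k = mul (mul (e i) a) (e j)) /\
        (forall a, exists cs : seq K,
            mul (mul (e i) a) (e j) = \sum_(k < size s) nth 0 cs k *: nth 0 s k)) /\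
    (forall a, exists ts : seq (I * I * A),
        a = \sum_(t <- ts) mul (mul (e t.1.1) t.2) (e t.1.2)).

Definition is_lmod (M : lmodType K) (act : A -> M -> M) : Prop :=
  (forall a, lin (act a)) /\ (forall m, lin (fun a => act a m)) /\
  (forall a b m, act (mul a b) m = act a (act b m)).

Definition modhom (M N : lmodType K) (actM : A -> M -> M) (actN : A -> N -> N)
  (f : M -> N) : Prop :=
  lin f /\ forall a m, f (actM a m) = actN a (f m).

Definition quasicoherent (M : lmodType K) (act : A -> M -> M) : Prop :=
  forall m, exists a, act a m = m.

Definition fin_gen (M : lmodType K) (act : A -> M -> M) : Prop :=
  exists xs : seq M, forall m, exists (as_ : seq A) (cs : seq K),
    m = \sum_(k < size xs) (act (nth 0 as_ k) (nth 0 xs k) + nth 0 cs k *: nth 0 xs k).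

Definition coherent (M : lmodType K) (act : A -> M -> M) : Prop :=
  quasicoherent act /\ fin_gen act.

Definition submodule (M : lmodType K) (act : A -> M -> M) (S : M -> Prop) : Prop :=
  S 0 /\ (forall c x y, S x -> S y -> S (c *: x + y)) /\
  (forall a x, S x -> S (act a x)).

Definition irreducible (M : lmodType K) (act : A -> M -> M) : Prop :=
  (exists m : M, m <> 0) /\
  forall S, submodule act S -> (forall m, S m -> m = 0) \/ (forall m, S m).

(* e is generating: every irreducible quasicoherent left module is a quotient
   of the left ideal A e (a surjective A-module map A e ->> M, given by a
   linear map on A whose restriction to A e is A-linear and onto). *)
Definition generating_idem (e : A) : Prop :=
  idempotent e /\
  forall (M : lmodType K) (act : A -> M -> M), is_lmod act ->
    quasicoherent act -> irreducible act ->
    exists f : A -> M, lin f /\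
      (forall b a, f (mul b (mul a e)) = act b (f (mul a e))) /\
      (forall m, exists a, f (mul a e) = m).

Definition strongly_AUF : Prop := AUF /\ exists e, generating_idem e.

Definition projective (G : lmodType K) (actG : A -> G -> G) : Prop :=
  forall (M N : lmodType K) (actM : A -> M -> M) (actN : A -> N -> N),
    is_lmod actM -> is_lmod actN ->
    forall p : M -> N, modhom actM actN p -> (forall n, exists m, p m = n) ->
    forall f : G -> N, modhom actG actN f ->
    exists g : G -> M, modhom actG actM g /\ forall x, p (g x) = f x.

Definition proj_generator (G : lmodType K) (actG : A -> G -> G) : Prop :=
  coherent actG /\ projective actG /\
  forall (M : lmodType K) (act : A -> M -> M), is_lmod act -> coherent act ->
    exists fs : seq (G -> M),
      (forall k, (k < size fs)%N -> modhom actG act (nth (fun _ => 0) fs k)) /\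
      (forall m, exists gs : seq G,
          m = \sum_(k < size fs) nth (fun _ => 0) fs k (nth 0 gs k)).

Definition in_dual (M : lmodType K) (act : A -> M -> M) (phi : M -> K) : Prop :=
  lin_fun phi /\ exists e, idempotent e /\ forall eta, phi (act e eta) = phi eta.

Definition in_End0 (M : lmodType K) (act : A -> M -> M) (T : M -> M) : Prop :=
  lin T /\
  exists (phis : seq (M -> K)) (xis : seq M),
    size phis = size xis /\
    (forall k, (k < size phis)%N -> in_dual act (nth (fun _ => 0) phis k)) /\
    (forall eta, T eta = \sum_(k < size phis) nth (fun _ => 0) phis k eta *: nth 0 xis k).

(* End^0_{-,B}(G) with B = End_{A,-}(G)^op acting on the right by xi.S = S xi *)
Definition in_End0_B (G : lmodType K) (actG : A -> G -> G) (T : G -> G) : Prop :=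
  in_End0 actG T /\
  forall S : G -> G, modhom actG actG S -> forall xi, T (S xi) = S (T xi).

End AUFDefs.

(* Main.v *)
Require Import Defs.
From HB Require Import structures.
From mathcomp Require Import all_boot all_order all_algebra.
From mathcomp Require Import reals complex boolp.
Set Implicit Arguments. Unset Strict Implicit. Unset Printing Implicit Defensive.
Import GRing.Theory.
Local Open Scope ring_scope.

Section LinLemmas.
Variable K : fieldType.
Variables U V : lmodType K.
Variable f : U -> V.
Hypothesis hf : lin f.
Lemma lin0 : f 0 = 0.
Proof.
have := hf 1 0 0; rewrite !scale1r !addr0 => h.
by apply: (addrI (f 0)); rewrite addr0 -h.
Qed.
Lemma linD x y : f (x + y) = f x + f y.
Proof. by have := hf 1 x y; rewrite !scale1r. Qed.
Lemma linZ c x : f (c *: x) = c *: f x.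
Proof. by have := hf c x 0; rewrite !addr0 lin0 addr0. Qed.
Lemma linN x : f (- x) = - f x.
Proof. by rewrite -scaleN1r linZ scaleN1r. Qed.
Lemma linB x y : f (x - y) = f x - f y.
Proof. by rewrite linD linN. Qed.
Lemma lin_sum (I : Type) (r : seq I) (P : pred I) (F : I -> U) :
  f (\sum_(i <- r | P i) F i) = \sum_(i <- r | P i) f (F i).
Proof.
elim: r => [|i r IH]; first by rewrite !big_nil lin0.
by rewrite !big_cons; case: (P i); rewrite ?linD IH.
Qed.
End LinLemmas.

Section LinFunLemmas.
Variable K : fieldType.
Variables U : lmodType K.
Variable f : U -> K.
Hypothesis hf : lin_fun f.
Lemma linf0 : f 0 = 0.
Proof.
have := hf 1 0 0; rewrite !scale1r !addr0 mul1r => h.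
by apply: (addrI (f 0)); rewrite addr0 -h.
Qed.
End LinFunLemmas.

Section Span.
Variable K : fieldType.
Variable V : lmodType K.
Implicit Types (S W : seq V) (v : V).

Definition inspan S v := exists l : seq K, v = \sum_(k < size S) l`_k *: S`_k.

Lemma inspan0 S : inspan S 0.
Proof. by exists [::]; rewrite big1 // => k _; rewrite nth_nil scale0r. Qed.

Lemma inspanD S v w : inspan S v -> inspan S w -> inspan S (v + w).
Proof.
move=> [l1 ->] [l2 ->]; exists (mkseq (fun k => l1`_k + l2`_k) (size S)).
rewrite -big_split /=; apply: eq_bigr => k _.
by rewrite nth_mkseq // scalerDl.
Qed.

Lemma inspanZ S c v : inspan S v -> inspan S (c *: v).
Proof.
move=> [l ->]; exists (mkseq (fun k => c * l`_k) (size S)).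
rewrite scaler_sumr; apply: eq_bigr => k _.
by rewrite nth_mkseq // scalerA.
Qed.

Lemma inspanN S v : inspan S v -> inspan S (- v).
Proof. by move=> h; rewrite -scaleN1r; apply: inspanZ. Qed.

Lemma inspanB S v w : inspan S v -> inspan S w -> inspan S (v - w).
Proof. by move=> h1 h2; apply: inspanD => //; apply: inspanN. Qed.

Lemma inspan_sum S (I : Type) (r : seq I) (F : I -> V) :
  (forall i, inspan S (F i)) -> inspan S (\sum_(i <- r) F i).
Proof.
move=> h; elim: r => [|i r IH]; first by rewrite big_nil; apply: inspan0.
by rewrite big_cons; apply: inspanD.
Qed.

Lemma inspan_nth S k : (k < size S)%N -> inspan S S`_k.
Proof.
move=> hk; exists (mkseq (fun j => (j == k)%:R) (size S)).
rewrite (bigD1 (Ordinal hk)) //= nth_mkseq // eqxx scale1r big1 ?addr0 //.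
move=> j; rewrite nth_mkseq // => hj.
have -> : (nat_of_ord j == k) = false.
  by apply/negbTE; apply: contra hj => /eqP e; apply/eqP/val_inj.
by rewrite scale0r.
Qed.

Lemma inspan_mem S v : v \in S -> inspan S v.
Proof. by move=> h; rewrite -(nth_index 0 h); apply: inspan_nth; rewrite index_mem. Qed.

Lemma inspan_sub S S' v : (forall k, (k < size S)%N -> inspan S' S`_k) ->
  inspan S v -> inspan S' v.
Proof.
move=> h [l ->]; apply: inspan_sum => k; apply: inspanZ; exact: h.
Qed.

Lemma inspan_cons S w v : inspan S v -> inspan (w :: S) v.
Proof.
apply: inspan_sub => k hk; exact: (@inspan_nth (w :: S) k.+1).
Qed.

Lemma inspan_consP S w v : inspan (w :: S) v -> exists t, inspan S (v - t *: w).
Proof.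
move=> [l ->]; exists l`_0; rewrite big_ord_recl /= addrAC subrr add0r.
exists (behead l); apply: eq_bigr => k _.
by rewrite -nth_behead.
Qed.

Lemma inspan_consI S w v t : inspan S (v - t *: w) -> inspan (w :: S) v.
Proof.
move=> h; rewrite -(subrK (t *: w) v); apply: inspanD; first exact: inspan_cons.
apply: inspanZ; exact: (@inspan_nth (w :: S) 0).
Qed.

End Span.

Lemma inspan_map (K : fieldType) (U V : lmodType K) (f : U -> V) (S : seq U) u :
  lin f -> inspan S u -> inspan (map f S) (f u).
Proof.
move=> hf [l ->]; exists l; rewrite (lin_sum hf) size_map; apply: eq_bigr => k _.
by rewrite (linZ hf) (nth_map 0).
Qed.

From Stdlib Require Import ClassicalEpsilon.

Section Coords.
Variable K : fieldType.
Variable V : lmodType K.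

Definition nthf (cs : seq (V -> K)) k := nth (fun _ => 0) cs k.

Definition coords_prop (W : seq V) (cs : seq (V -> K)) :=
  size cs = size W /\
  (forall k, (k < size W)%N -> forall t v v', inspan W v -> inspan W v' ->
      nthf cs k (t *: v + v') = t * nthf cs k v + nthf cs k v') /\
  (forall v, inspan W v -> v = \sum_(k < size W) nthf cs k v *: W`_k).

Lemma coords_exist (W : seq V) : exists cs, coords_prop W cs.
Proof.
elim: W => [|w W [cs [hs [hl hr]]]].
  exists [::]; split=> //; split=> // v [l ->]; by rewrite !big_ord0.
have [hw|hw] := classic (inspan W w).
  have hspan v : inspan (w :: W) v -> inspan W v.
    move=> /inspan_consP [t h]; rewrite -(subrK (t *: w) v).
    by apply: inspanD => //; apply: inspanZ.
  exists ((fun _ => 0) :: cs); split; first by rewrite /= hs.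
  split.
    move=> [|k] hk t v v' hv hv' /=; first by rewrite mulr0 addr0.
    by apply: hl => //; apply: hspan.
  move=> v hv; rewrite big_ord_recl /= scale0r add0r.
  by rewrite {1}(hr v (hspan v hv)).
pose tf v := epsilon (inhabits 0) (fun t => inspan W (v - t *: w)).
have tf_spec v : inspan (w :: W) v -> inspan W (v - tf v *: w).
  move=> /inspan_consP h; exact: (epsilon_spec (inhabits 0) _ h).
have tf_uniq v t1 t2 : inspan W (v - t1 *: w) -> inspan W (v - t2 *: w) -> t1 = t2.
  move=> h1 h2; have h := inspanB h2 h1.
  have e : v - t2 *: w - (v - t1 *: w) = (t1 - t2) *: w.
    by rewrite scalerBl opprB addrC addrA addrNK.
  rewrite e in h; apply/eqP; rewrite -subr_eq0; apply/negP => /negP hne.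
  apply: hw; have := inspanZ (t1 - t2)^-1 h; by rewrite scalerA mulVf // scale1r.
pose pr v := v - tf v *: w.
have tf_lin t v v' : inspan (w :: W) v -> inspan (w :: W) v' ->
    tf (t *: v + v') = t * tf v + tf v'.
  move=> hv hv'; apply: (@tf_uniq (t *: v + v')).
    by apply: tf_spec; apply: inspanD => //; apply: inspanZ.
  have e : t *: v + v' - (t * tf v + tf v') *: w = t *: pr v + pr v'.
    rewrite /pr scalerDl -scalerA scalerBr opprD addrACA.
    done.
  by rewrite e; apply: inspanD; [apply: inspanZ|]; apply: tf_spec.
have pr_lin t v v' : inspan (w :: W) v -> inspan (w :: W) v' ->
    pr (t *: v + v') = t *: pr v + pr v'.
  move=> hv hv'; rewrite /pr tf_lin // scalerDl -scalerA scalerBr opprD addrACA.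
  done.
exists (tf :: [seq (fun v => c (pr v)) | c <- cs]).
split; first by rewrite /= size_map hs.
split.
  move=> [|k] hk t v v' hv hv' /=; first exact: tf_lin.
  rewrite /nthf /= (nth_map (fun _ => 0)) ?hs //.
  rewrite pr_lin //; apply: hl => //; exact: tf_spec.
move=> v hv; rewrite big_ord_recl /=.
rewrite {1}(_ : v = tf v *: w + pr v); last by rewrite /pr addrC subrK.
congr (_ + _); rewrite (hr (pr v) (tf_spec v hv)); apply: eq_bigr => k _.
by rewrite /nthf /= (nth_map (fun _ => 0)) ?hs ?add0n.
Qed.
End Coords.

Lemma inspan_sumP (K : fieldType) (V : lmodType K) (S : seq V) (I : Type) (r : seq I)
   (P : pred I) (F : I -> V) :
  (forall i, P i -> inspan S (F i)) -> inspan S (\sum_(i <- r | P i) F i).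
Proof.
move=> h; apply: (big_ind (inspan S)); [exact: inspan0| exact: inspanD|exact: h].
Qed.

Lemma inspan_catl (K : fieldType) (V : lmodType K) (S S' : seq V) v :
  inspan S v -> inspan (S ++ S') v.
Proof.
apply: inspan_sub => k hk; have := nth_cat 0 S S' k; rewrite hk => <-.
by apply: inspan_nth; rewrite size_cat ltn_addr.
Qed.

Lemma inspan_catr (K : fieldType) (V : lmodType K) (S S' : seq V) v :
  inspan S' v -> inspan (S ++ S') v.
Proof.
apply: inspan_sub => k hk; have := nth_cat 0 S S' (size S + k).
rewrite ltnNge leq_addr /= addKn => <-.
by apply: inspan_nth; rewrite size_cat ltn_add2l.
Qed.

Section Units.
Variable K : fieldType.
Variable A : lmodType K.
Variable mul : A -> A -> A.
Hypothesis Halg : nu_alg mul.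
Variable I : Type.
Variable e : I -> A.
Hypothesis He : forall i, Defs.idempotent mul (e i).
Hypothesis Horth : forall i j, i <> j -> mul (e i) (e j) = 0.

Local Notation CI := {classic I}.

Lemma mulA a b c : mul a (mul b c) = mul (mul a b) c.
Proof. by case: Halg => h _; apply: h. Qed.
Lemma linl a : lin (mul a).
Proof. by case: Halg => _ [h _]; apply: h. Qed.
Lemma linr b : lin (fun a => mul a b).
Proof. by case: Halg => _ [_ h]; apply: h. Qed.
Lemma mul_sumr a (J : Type) (r : seq J) (P : pred J) (F : J -> A) :
  mul a (\sum_(j <- r | P j) F j) = \sum_(j <- r | P j) mul a (F j).
Proof. exact: (lin_sum (linl a)). Qed.
Lemma mul_suml b (J : Type) (r : seq J) (P : pred J) (F : J -> A) :
  mul (\sum_(j <- r | P j) F j) b = \sum_(j <- r | P j) mul (F j) b.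
Proof. exact: (lin_sum (linr b)). Qed.
Lemma mul0r' a : mul 0 a = 0. Proof. exact: (lin0 (linr a)). Qed.
Lemma mulr0' a : mul a 0 = 0. Proof. exact: (lin0 (linl a)). Qed.
Lemma mulDl' a b c : mul (a + b) c = mul a c + mul b c. Proof. exact: (linD (linr c)). Qed.
Lemma mulDr' a b c : mul a (b + c) = mul a b + mul a c. Proof. exact: (linD (linl a)). Qed.

Definition FD (D : seq CI) : A := \sum_(i <- D) e i.

Lemma eF_in (D : seq CI) (j : CI) : uniq D -> j \in D -> mul (e j) (FD D) = e j.
Proof.
move=> hu hj; rewrite /FD mul_sumr (bigD1_seq j) //= He big1 ?addr0 //.
by move=> i hij; apply: Horth => eji; rewrite eji eqxx in hij.
Qed.

Lemma Fe_in (D : seq CI) (j : CI) : uniq D -> j \in D -> mul (FD D) (e j) = e j.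
Proof.
move=> hu hj; rewrite /FD mul_suml (bigD1_seq j) //= He big1 ?addr0 //.
by move=> i hij; apply: Horth => eji; rewrite eji eqxx in hij.
Qed.

Lemma FD_idem (D : seq CI) : uniq D -> Defs.idempotent mul (FD D).
Proof.
move=> hu; rewrite /Defs.idempotent {2}/FD mul_sumr /FD.
by apply: eq_big_seq => i hi; apply: Fe_in.
Qed.

Definition good (D : seq CI) (x : A) := mul (FD D) x = x /\ mul x (FD D) = x.

Lemma good_mono (D D' : seq CI) x : uniq D' -> {subset D <= D'} -> good D x -> good D' x.
Proof.
move=> hu hs [h1 h2]; split.
  rewrite -h1 mulA; congr (mul _ x).
  rewrite {2}/FD mul_sumr; apply: eq_big_seq => i hi; apply: Fe_in => //; exact: hs.
rewrite -h2 -mulA; congr (mul x _).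
rewrite {1}/FD mul_suml; apply: eq_big_seq => i hi; apply: eF_in => //; exact: hs.
Qed.

Fixpoint idx (ts : seq (I * I * A)) : seq CI :=
  match ts with nil => nil | t :: ts' => (t.1.1 : CI) :: (t.1.2 : CI) :: idx ts' end.

Lemma idx_mem t ts : List.In t ts -> ((t.1.1 : CI) \in idx ts) /\ ((t.1.2 : CI) \in idx ts).
Proof.
elim: ts => [|t' ts IH] //= [<-|ht].
  by rewrite !inE !eqxx orbT.
by have [a b] := IH ht; rewrite !inE a b !orbT.
Qed.

Lemma good_sum (D : seq CI) (ts : seq (I * I * A)) : uniq D ->
  (forall t, List.In t ts -> ((t.1.1 : CI) \in D) /\ ((t.1.2 : CI) \in D)) ->
  good D (\sum_(t <- ts) mul (mul (e t.1.1) t.2) (e t.1.2)).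
Proof.
move=> hu; elim: ts => [|t ts IH] hts.
  by rewrite big_nil; split; [apply: mulr0'|apply: mul0r'].
have [h1 h2] := hts t (or_introl erefl).
have [g1 g2] := IH (fun t' ht' => hts t' (or_intror ht')).
rewrite big_cons; split.
  by rewrite mulDr' g1 !mulA Fe_in.
by rewrite mulDl' g2 -mulA eF_in.
Qed.

Lemma good_list (xs : seq A) :
  (forall a, exists ts : seq (I * I * A), a = \sum_(t <- ts) mul (mul (e t.1.1) t.2) (e t.1.2)) ->
  exists D, uniq D /\ forall x, x \in xs -> good D x.
Proof.
move=> hdec; elim: xs => [|x xs [D2 [hu2 h2]]]; first by exists [::].
have [ts ->] := hdec x.
pose D1 := undup (idx ts).
have g1 : good D1 (\sum_(t <- ts) mul (mul (e t.1.1) t.2) (e t.1.2)).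
  apply: good_sum; first exact: undup_uniq.
  by move=> t ht; rewrite /D1 !mem_undup; apply: idx_mem.
exists (undup (D1 ++ D2)); split; first exact: undup_uniq.
move=> y; rewrite inE => /orP [/eqP -> | hy].
  by apply: (good_mono (undup_uniq _) _ g1) => i hi; rewrite mem_undup mem_cat hi.
by apply: (good_mono (undup_uniq _) _ (h2 y hy)) => i hi; rewrite mem_undup mem_cat hi orbT.
Qed.

Lemma fin_corner (D : seq CI) :
  (forall i j, exists s : seq A, forall a, inspan s (mul (mul (e i) a) (e j))) ->
  exists S : seq A, forall z, inspan S (mul (mul (FD D) z) (FD D)).
Proof.
move=> hfd.
have [S hS] : exists S : seq A, forall p : CI * CI, p \in [seq (i, j) | i <- D, j <- D] ->
    forall z, inspan S (mul (mul (e p.1) z) (e p.2)).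
  elim: [seq (i, j) | i <- D, j <- D] => [|p P [S hS]]; first by exists [::].
  have [s hs] := hfd p.1 p.2.
  exists (s ++ S) => q; rewrite inE => /orP [/eqP -> | hq] z.
    exact: inspan_catl.
  exact/inspan_catr/hS.
exists S => z; rewrite /FD mul_suml mul_suml.
rewrite big_seq; apply: inspan_sumP => i hi; rewrite mul_sumr.
rewrite big_seq; apply: inspan_sumP => j hj.
by apply: (hS (i, j)); apply/allpairsP; exists (i, j).
Qed.
End Units.

Section AFsec.
Variable K : fieldType.
Variable A : lmodType K.
Variable mul : A -> A -> A.
Hypothesis Halg : nu_alg mul.
Variable F : A.
Hypothesis HF : Defs.idempotent mul F.
Hypothesis Hloc : forall x, exists b, mul b x = x.

Definition PF : {pred A} := [pred x | mul x F == x].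
Lemma PF_closed : submod_closed PF.
Proof.
split.
  by rewrite inE; apply/eqP; apply: (lin0 (linr Halg F)).
move=> c x y; rewrite !inE => /eqP hx /eqP hy; apply/eqP.
by rewrite (linr Halg F) hx hy.
Qed.
HB.instance Definition _ := GRing.isSubmodClosed.Build K A PF PF_closed.
Inductive AF : Type := MkAF (x : A) of x \in PF.
Definition AFval (u : AF) := let: MkAF x _ := u in x.
HB.instance Definition _ := [isSub for AFval].
HB.instance Definition _ := [Choice of AF by <:].
HB.instance Definition _ := [SubChoice_isSubLmodule of AF by <:].

Lemma val_lin : lin (val : AF -> A).
Proof. by []. Qed.

Definition actAF (b : A) (x : AF) : AF := insubd x (mul b (val x)).

Lemma actAF_val b x : val (actAF b x) = mul b (val x).
Proof.
rewrite /actAF val_insubd inE.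
have hx := valP x; rewrite inE in hx.
by rewrite -(mulA Halg) (eqP hx) eqxx.
Qed.

Lemma actAF_lmod : is_lmod mul actAF.
Proof.
split; [|split].
- move=> a c x y; apply: val_inj.
  by rewrite actAF_val val_lin (linl Halg) !val_lin !actAF_val.
- move=> m c x y; apply: val_inj.
  by rewrite actAF_val (linr Halg) val_lin !actAF_val.
- by move=> a b m; apply: val_inj; rewrite !actAF_val (mulA Halg).
Qed.

Lemma F_in : F \in PF.
Proof. by rewrite inE HF. Qed.

Definition Fel : AF := MkAF F_in.

Lemma actAF_coh : coherent actAF.
Proof.
split.
  move=> m; have [b hb] := Hloc (val m); exists b; apply: val_inj.
  by rewrite actAF_val.
exists [:: Fel] => m; exists [:: val m], [::].
rewrite big_ord1 /= scale0r addr0; apply: val_inj; rewrite actAF_val /=.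
by have := valP m; rewrite inE => /eqP.
Qed.

Lemma gen_AF (G : lmodType K) (actG : A -> G -> G) :
  (forall (M : lmodType K) (act : A -> M -> M), is_lmod mul act -> coherent act ->
    exists fs : seq (G -> M),
      (forall k, (k < size fs)%N -> modhom actG act (nth (fun _ => 0) fs k)) /\
      (forall m, exists gs : seq G,
          m = \sum_(k < size fs) nth (fun _ => 0) fs k (nth 0 gs k))) ->
  exists fs : seq (G -> A),
    (forall k, (k < size fs)%N -> lin (nth (fun _ => 0) fs k) /\
       forall b g, nth (fun _ => 0) fs k (actG b g) = mul b (nth (fun _ => 0) fs k g)) /\
    exists gs : seq G, F = \sum_(k < size fs) nth (fun _ => 0) fs k (nth 0 gs k).
Proof.
move=> hgen; have [fs [hfs hsur]] := hgen _ _ actAF_lmod actAF_coh.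
exists [seq (fun g => val (f g)) | f <- fs]; split.
  move=> k; rewrite size_map => hk; rewrite (nth_map (fun _ => 0)) //.
  have [hl hc] := hfs k hk; split.
    by move=> c x y; rewrite hl.
  by move=> b g; rewrite hc actAF_val.
have [gs hgs] := hsur Fel; exists gs.
have -> : F = val Fel by [].
rewrite hgs (lin_sum val_lin) size_map; apply: eq_bigr => k _.
by rewrite (nth_map (fun _ => 0)).
Qed.
End AFsec.

Lemma fchoice (T : Type) (x0 : T) n (P : nat -> T -> Prop) :
  (forall k, (k < n)%N -> exists a, P k a) ->
  exists s : seq T, size s = n /\ forall k, (k < n)%N -> P k (nth x0 s k).
Proof.
elim: n => [|n IH] h; first by exists [::].
have [s [hs hP]] := IH (fun k hk => h k (ltnW hk)).
have [a ha] := h n (ltnSn n).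
exists (rcons s a); split; first by rewrite size_rcons hs.
move=> k hk; rewrite nth_rcons hs.
case: ltnP => [hkn|hkn]; first exact: hP.
have -> : k = n by apply/eqP; rewrite eqn_leq hkn -ltnS hk.
by rewrite eqxx.
Qed.

Unset Implicit Arguments.

Theorem theorem11p7 (R : realType) (A : lmodType (complex R)) (mul : A -> A -> A)
    (G : lmodType (complex R)) (actG : A -> G -> G) :
  nu_alg mul -> strongly_AUF mul -> is_lmod mul actG -> proj_generator mul actG ->
  (* a |-> (left multiplication by a) is linear, *)
  (forall (c : complex R) (a a' : A) (xi : G),
      actG (c *: a + a') xi = c *: actG a xi + actG a' xi) /\
  (* lands in End^0_{-,B}(G), *)
  (forall a : A, in_End0_B mul actG (actG a)) /\
  (* is injective, *)
  (forall a a' : A, (forall xi, actG a xi = actG a' xi) -> a = a') /\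
  (* and is surjective onto End^0_{-,B}(G). *)
  (forall T : G -> G, in_End0_B mul actG T -> exists a : A, forall xi, T xi = actG a xi).
Proof.
move=> Halg [[I [e [He [Horth [Hfd Hdec]]]]] _] [HactL [HactR HactM]] [[Hqc Hfg] [_ Hgen]].
have Hunits xs := good_list Halg He Horth xs Hdec.
have Hloc x : exists b, mul b x = x.
  have [D [_ hD]] := Hunits [:: x]; exists (FD e D).
  by have [] := hD x (mem_head _ _).
split; first by move=> c a a' xi; exact: HactR.
split.
  move=> a; split; last by move=> S [_ hS] xi; rewrite hS.
  split; first exact: HactL.
  have [xs hxs] := Hfg.
  have [bs [hbs hbsP]] := @fchoice A 0 (size xs) (fun k b => actG b xs`_k = xs`_k)
    (fun k _ => Hqc xs`_k).
  have [D [hu hD]] := Hunits (a :: bs).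
  have HF := FD_idem Halg He Horth hu.
  have haF : mul a (FD e D) = a := (hD a (mem_head _ _)).2.
  have hFx k : (k < size xs)%N -> actG (FD e D) xs`_k = xs`_k.
    move=> hk; rewrite -(hbsP k hk) -HactM.
    have [h1 _] := hD (bs`_k) (ltac:(by rewrite inE mem_nth ?orbT // hbs)).
    by rewrite h1.
  have Hfd' : forall i j, exists s, forall z, inspan s (mul (mul (e i) z) (e j)).
    move=> i j; have [s [_ h]] := Hfd i j; exists s => z; have [cs hcs] := h z.
    by exists cs.
  have [S hS] := fin_corner Halg D Hfd'.
  set F := FD e D in HF haF hFx hS.
  pose W := [seq actG s x | s <- S, x <- xs] ++ xs.
  have hW eta : inspan W (actG F eta).
    have [as_ [cs ->]] := hxs eta.
    rewrite (lin_sum (HactL F)); apply: inspan_sumP => k _.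
    rewrite (linD (HactL F)) (linZ (HactL F)) hFx //.
    apply: inspanD; last first.
      by apply: inspanZ; apply: inspan_catr; apply: inspan_nth.
    rewrite (_ : actG F (actG _ _) = actG (mul (mul F as_`_k) F) xs`_k); last first.
      by rewrite !HactM hFx.
    apply: inspan_catl; have h := inspan_map (HactR xs`_k) (hS as_`_k).
    apply: (inspan_sub _ h) => j; rewrite size_map => hj; rewrite (nth_map 0) //.
    apply: inspan_mem; apply/allpairsP; exists (S`_j, xs`_k); split => //.
      exact: mem_nth.
    exact: mem_nth.
  have [cs [hcs [hcl hcr]]] := coords_exist W.
  exists [seq (fun eta => c (actG F eta)) | c <- cs], [seq actG a w | w <- W].
  split; first by rewrite !size_map hcs.
  split.
    move=> k; rewrite size_map => hk; rewrite (nth_map (fun _ => 0)) //.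
    split.
      move=> t x y; rewrite (HactL F t x y).
      apply: hcl; try apply: hW; by rewrite -hcs.
    by exists F; split => // eta; rewrite -HactM HF.
  move=> eta; rewrite size_map hcs.
  rewrite -{1}haF HactM {1}(hcr _ (hW eta)) (lin_sum (HactL a)).
  apply: eq_bigr => k _; rewrite (linZ (HactL a)) (nth_map (fun _ => 0)) ?hcs //.
  by rewrite (nth_map 0).
split.
  move=> a a' h.
  have hd xi : actG (a - a') xi = 0 by rewrite (linB (HactR xi)) h subrr.
  have [D [hu hD]] := Hunits [:: a - a'].
  have [_ hdF] := hD _ (mem_head _ _).
  have HF := FD_idem Halg He Horth hu.
  have [fs [hfs [gs hgs]]] := gen_AF Halg HF Hloc Hgen.
  apply/eqP; rewrite -subr_eq0; apply/eqP.
  rewrite -hdF hgs mul_sumr //; apply: big1 => k _.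
  have [hl hc] := hfs k (ltn_ord k).
  by rewrite -hc hd (lin0 hl).
move=> T [[HTl [phis [xis [hsz [hdual hrep]]]]] HTB].
have [es [hes hesP]] := @fchoice A 0 (size phis) (fun k a => Defs.idempotent mul a /\
    forall eta, nth (fun _ => 0) phis k (actG a eta) = nth (fun _ => 0) phis k eta)
    (fun k hk => (hdual k hk).2).
have [D [hu hD]] := Hunits es.
have HF := FD_idem Halg He Horth hu.
set F := FD e D in HF.
have hphiF k eta : (k < size phis)%N ->
    nth (fun _ => 0) phis k (actG F eta) = nth (fun _ => 0) phis k eta.
  move=> hk; have [_ h] := hesP k hk.
  have [_ hr] := hD (nth 0 es k) (mem_nth 0 (eq_ind_r (fun n => (k < n)%N) hk hes)).
  by rewrite -h -HactM hr h.
have hTF eta : T (actG F eta) = T eta.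
  rewrite !hrep; apply: eq_bigr => k _; by rewrite hphiF.
have [fs [hfs [gs hgs]]] := gen_AF Halg HF Hloc Hgen.
exists (\sum_(k < size fs) nth (fun _ => 0) fs k (T (nth 0 gs k))) => xi.
rewrite -hTF hgs (lin_sum (HactR xi)) (lin_sum HTl) (lin_sum (HactR xi)).
apply: eq_bigr => k _.
have [hl hc] := hfs k (ltn_ord k).
pose S g := actG (nth (fun _ => 0) fs k g) xi.
have hS : modhom actG actG S.
  split.
    by move=> c x y; rewrite /S hl HactR.
  by move=> b g; rewrite /S hc HactM.
exact: (HTB S hS).
Qed.
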